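(* Let $\mathcal A$ be a commutative semiring with negation map $(-)$. For all $A,B\in M_n(\mathcal A)$, $|A|\,|B|\preceq_\circ|AB|$.
   Context: A commutative semiring: commutative associative addition with neutral $\mathbb 0$, commutative associative multiplication with identity $\mathbb 1$, distributive, $x\mathbb 0=\mathbb 0$. Negation map: $(-):\mathcal A\to\mathcal A$ with $(-)(x+y)=(-)x+(-)y$, $(-)((-)x)=x$, $(-)(xy)=((-)x)y$. Write $x(-)y:=x+((-)y)$, $x^\circ:=x(-)x$; $x\preceq_\circ y$ iff $y=x+z^\circ$ for some $z\in\mathcal A$. For a permutation $\pi$, $(-)^\pi x=x$ if $\pi$ is even and $(-)x$ if odd. The $(-)$-determinant of $A=(a_{ij})$ is $|A|=\sum_{\pi\in S_n}(-)^\pi\prod_i a_{i,\pi(i)}$. *)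

(* Defs.v *)
From HB Require Import structures.
From mathcomp Require Import all_boot all_order all_algebra all_fingroup.
Set Implicit Arguments. Unset Strict Implicit. Unset Printing Implicit Defensive.
Import GRing.Theory.
Local Open Scope ring_scope.

Definition negation_map (A : comPzSemiRingType) (neg : A -> A) : Prop :=
  [/\ forall x y : A, neg (x + y) = neg x + neg y,
      forall x : A, neg (neg x) = x &
      forall x y : A, neg (x * y) = neg x * y].

Definition neg_sign (A : comPzSemiRingType) (neg : A -> A) (n : nat)
  (s : 'S_n) (x : A) : A := if odd_perm s then neg x else x.

Definition neg_det (A : comPzSemiRingType) (neg : A -> A) (n : nat)
  (M : 'M[A]_n) : A :=
  \sum_(s : 'S_n) neg_sign neg s (\prod_(i < n) M i (s i)).

Definition quasi_zero (A : comPzSemiRingType) (neg : A -> A) (x : A) : A :=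
  x + neg x.

Definition circ_le (A : comPzSemiRingType) (neg : A -> A) (x y : A) : Prop :=
  exists z : A, y = x + quasi_zero neg z.

(* Main.v *)
Require Import Defs.
From HB Require Import structures.
From mathcomp Require Import all_boot all_order all_algebra all_fingroup.
Local Open Scope ring_scope.
Import GRing.Theory.

Section Helpers.
Context {A : comPzSemiRingType} {neg : A -> A} (hneg : negation_map neg).

Lemma negD x y : neg (x + y) = neg x + neg y. Proof. by case: hneg. Qed.
Lemma negK x : neg (neg x) = x. Proof. by case: hneg. Qed.
Lemma negMl x y : neg (x * y) = neg x * y. Proof. by case: hneg. Qed.
Lemma neg0 : neg 0 = 0. Proof. by have := negMl 0 0; rewrite mul0r mulr0. Qed.
Lemma negMr x y : neg (x * y) = x * neg y.
Proof. by rewrite mulrC negMl mulrC. Qed.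
Lemma neg_sum I r (P : pred I) F :
  neg (\sum_(i <- r | P i) F i) = \sum_(i <- r | P i) neg (F i).
Proof. exact: (big_morph neg negD neg0). Qed.

Lemma sgMl n (s : 'S_n) x y : neg_sign neg s x * y = neg_sign neg s (x * y).
Proof. by rewrite /neg_sign; case: odd_perm; rewrite ?negMl. Qed.
Lemma sgMr n (s : 'S_n) x y : x * neg_sign neg s y = neg_sign neg s (x * y).
Proof. by rewrite /neg_sign; case: odd_perm; rewrite ?negMr. Qed.
Lemma sg_sum n (s : 'S_n) I r (P : pred I) F :
  neg_sign neg s (\sum_(i <- r | P i) F i) = \sum_(i <- r | P i) neg_sign neg s (F i).
Proof. by rewrite /neg_sign; case: odd_perm; rewrite ?neg_sum. Qed.
Lemma sgM n (s t : 'S_n) x : neg_sign neg (s * t)%g x = neg_sign neg s (neg_sign neg t x).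
Proof.
by rewrite /neg_sign odd_permM; case: (odd_perm s); case: (odd_perm t); rewrite /= ?negK.
Qed.

Lemma qz_sum I r (P : pred I) F :
  (forall i, P i -> exists w, F i = quasi_zero neg w) ->
  exists w, \sum_(i <- r | P i) F i = quasi_zero neg w.
Proof.
move=> H; apply: (big_ind (fun x => exists w, x = quasi_zero neg w)) => //.
  by exists 0; rewrite /quasi_zero neg0 addr0.
move=> x y [a ->] [b ->]; exists (a + b).
by rewrite /quasi_zero negD addrACA.
Qed.

End Helpers.

Theorem theorem8p22 (A : comPzSemiRingType) (neg : A -> A)
  (hneg : negation_map neg) (n : nat) (M N : 'M[A]_n) :
  circ_le neg (neg_det neg M * neg_det neg N) (neg_det neg (M *m N)).
Proof.
pose F := ('I_n ^ n)%type.
have E1 : neg_det neg (M *m N) = \sum_(f : F) \sum_(s : 'S_n)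
    neg_sign neg s (\prod_i (M i (f i) * N (f i) (s i))).
  rewrite /neg_det exchange_big; apply: eq_bigr => /= s _.
  rewrite -(sg_sum hneg); congr (neg_sign _ s _).
  rewrite -(bigA_distr_bigA (fun i j => M i j * N j (s i))) /=.
  by apply: eq_bigr => x _; rewrite mxE.
rewrite E1 (bigID (fun f : F => injectiveb f)) /=.
have Einj : \sum_(f : F | injectiveb f) \sum_(s : 'S_n)
    neg_sign neg s (\prod_i (M i (f i) * N (f i) (s i)))
    = neg_det neg M * neg_det neg N.
  rewrite /neg_det big_distrl /=.
  rewrite (reindex (@pval _)) /=; last first.
    pose in_Sn := insubd (1%g : 'S_n).
    by exists in_Sn => /= f Uf; first apply: val_inj; apply: insubdK.
  apply: eq_big => /= [s | s _]; rewrite ?(valP s) // big_distrr /=.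
  rewrite (reindex_inj (mulgI s)); apply: eq_bigr => t _ /=.
  rewrite big_split /= (sgM hneg) !pvalE (sgMl hneg) (sgMr hneg).
  do 2 f_equal; congr (_ * _).
  by rewrite [RHS](reindex_perm s); apply: eq_bigr => i _; rewrite permM.
rewrite Einj.
have [w Hw] : exists w, \sum_(f : F | ~~ injectiveb f) \sum_(s : 'S_n)
    neg_sign neg s (\prod_i (M i (f i) * N (f i) (s i))) = quasi_zero neg w.
  apply: qz_sum => // f Uf.
  pose c := \prod_i M i (f i).
  pose Y := fun s : 'S_n => \prod_i N (f i) (s i).
  have -> : \sum_(s : 'S_n) neg_sign neg s (\prod_i (M i (f i) * N (f i) (s i)))
      = c * \sum_(s : 'S_n) neg_sign neg s (Y s).
    rewrite big_distrr /=; apply: eq_bigr => s _.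
    by rewrite big_split /= (sgMr hneg).
  case/injectivePn: Uf => i1 [i2 Di12 Ef12].
  pose t := tperm i1 i2.
  have EY s : Y (t * s)%g = Y s.
    rewrite /Y (reindex_perm t); apply: eq_bigr => k _.
    rewrite permM tpermK; congr (N _ _).
    by rewrite /t; case: tpermP => // ->.
  exists (c * \sum_(s : 'S_n | ~~ odd_perm s) Y s).
  rewrite /quasi_zero (negMr hneg) -mulrDr; congr (_ * _).
  rewrite (bigID (fun s : 'S_n => odd_perm s)) /= addrC (neg_sum hneg).
  congr (_ + _).
    by apply: eq_bigr => s /negbTE Hs; rewrite /neg_sign Hs.
  rewrite (reindex_inj (mulgI t)) /=.
  apply: eq_big => [s | s Hs].
    by rewrite odd_mul_tperm Di12.
  move: Hs; rewrite odd_mul_tperm Di12 /= => Hs.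
  by rewrite /neg_sign odd_mul_tperm Di12 /= (negbTE Hs) EY.
by exists w; rewrite Hw addrC.
Qed.
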